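(* Let $C$ be the closed disk with center $(a,b)$ and radius $r>0$; for $i\in\mathbb{N}$ let $C_i$ be the closed disk with center $(ia,ib)$ and radius $ir$; let $\mathcal{S}=\bigcup_{i\geq0}C_i\cap\mathbb{N}^2$ and assume $\mathcal{S}$ is finitely generated. Let $\tau_1,\tau_2$ be the extremal rays of $L_{\mathbb{Q}_{\geq}}(C\cap\mathbb{R}^2_{\geq})$, $\mathcal{C}=L_{\mathbb{Q}_{\geq}}(C\cap\mathbb{R}^2_{\geq})\cap\mathbb{N}^2$, and for $j=1,2$ let $g_j$ be the generator of $\mathcal{C}\cap\tau_j$ (so $\mathcal{C}\cap\tau_j=\mathbb{N}g_j$). Let $M$ be the maximum of $\|g\|_1$ over the minimal system of generators $g$ of $\mathcal{C}$; let $l$ be the cardinality of the finite set $\mathrm{int}(\mathcal{C})\setminus\mathrm{int}(\mathcal{S})$; and let $k$ be the maximum of the integers $\lambda$ such that $\lambda g_j$ ($j\in\{1,2\}$) is a minimal generator of $\mathcal{S}\cap\tau_j$. Then every element $s$ of the minimal system of generators of $\mathcal{S}$ satisfies $$\|s\|_1\le 3^l(2k-1)M.$$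
   Context: $\mathbb{N}=\{0,1,2,\dots\}$; $\|(x_1,\dots,x_n)\|_1=\sum|x_i|$. For $A\subseteq\mathbb{R}^2_{\geq}$, $L_{\mathbb{Q}_{\geq}}(A)=\{\sum_{i=1}^p q_ia_i\mid p\in\mathbb{N},\ q_i\in\mathbb{Q}_{\geq},\ a_i\in A\}$ and its extremal rays are its two boundary half-lines from the origin. For a subset $A$ of this cone, $\mathrm{int}(A)=A\setminus(\tau_1\cup\tau_2)$. Minimal system of generators: a generating set (under non-negative integer combinations) no proper subset of which generates. *)

(* Defs.v *)
From Stdlib Require Import Reals QArith List.
Open Scope R_scope.

Definition pt := (R * R)%type.

Definition disk (a b r : R) (p : pt) : Prop :=
  (fst p - a) ^ 2 + (snd p - b) ^ 2 <= r ^ 2.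

Definition nonneg_quadrant (p : pt) : Prop := 0 <= fst p /\ 0 <= snd p.

Definition embed (p : nat * nat) : pt := (INR (fst p), INR (snd p)).

Fixpoint qcomb (l : list (Q * pt)) : pt :=
  match l with
  | nil => (0, 0)
  | (q, x) :: l' => let s := qcomb l' in
      (Q2R q * fst x + fst s, Q2R q * snd x + snd s)
  end.

Definition LQ (A : pt -> Prop) (x : pt) : Prop :=
  exists l : list (Q * pt),
    (forall qa, In qa l -> (0 <= fst qa)%Q /\ A (snd qa)) /\ x = qcomb l.

Definition cone_of_disk (a b r : R) : pt -> Prop :=
  LQ (fun x => disk a b r x /\ nonneg_quadrant x).

Definition circle_semigroup (a b r : R) (p : nat * nat) : Prop :=
  exists i : nat, disk (INR i * a) (INR i * b) (INR i * r) (embed p).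

Definition cone_semigroup (a b r : R) (p : nat * nat) : Prop :=
  cone_of_disk a b r (embed p).

Definition ray (u : pt) (x : pt) : Prop :=
  exists t, 0 <= t /\ x = (t * fst u, t * snd u).

Definition det (u x : pt) : R := fst u * snd x - snd u * fst x.

Definition in_closure (K : pt -> Prop) (x : pt) : Prop :=
  forall eps, 0 < eps ->
    exists y, K y /\ Rabs (fst x - fst y) + Rabs (snd x - snd y) < eps.

(* boundary half-line of a planar cone K: a half-line contained in the
   closure of K such that K lies entirely on one side of its supporting line *)
Definition is_extremal_ray (K : pt -> Prop) (u : pt) : Prop :=
  u <> (0, 0) /\
  (forall x, ray u x -> in_closure K x) /\
  ((forall x, K x -> 0 <= det u x) \/ (forall x, K x -> det u x <= 0)).

Definition interior_pts (u1 u2 : pt) (A : nat * nat -> Prop) (p : nat * nat) : Prop :=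
  A p /\ ~ ray u1 (embed p) /\ ~ ray u2 (embed p).

Inductive gen_by (G : nat * nat -> Prop) : nat * nat -> Prop :=
| gen_by0 : gen_by G (0%nat, 0%nat)
| gen_byS : forall g x, G g -> gen_by G x ->
    gen_by G ((fst g + fst x)%nat, (snd g + snd x)%nat).

Definition generates (M G : nat * nat -> Prop) : Prop :=
  forall x, M x <-> gen_by G x.

Definition finitely_generated (M : nat * nat -> Prop) : Prop :=
  exists l : list (nat * nat), generates M (fun x => In x l).

Definition min_gen_system (M G : nat * nat -> Prop) : Prop :=
  generates M G /\
  forall G' : nat * nat -> Prop,
    (forall x, G' x -> G x) -> generates M G' -> forall x, G x -> G' x.

Definition norm1 (p : nat * nat) : nat := (fst p + snd p)%nat.

Definition scale (n : nat) (p : nat * nat) : nat * nat :=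
  ((n * fst p)%nat, (n * snd p)%nat).

(* Main.v *)
Require Import Defs.
From Stdlib Require Import Reals QArith List.
From Stdlib Require Import Qreals Lra Lia Classical Wf_nat.
Open Scope R_scope.


Definition P2 := (nat * nat)%type.
Definition z0 : P2 := (0%nat, 0%nat).
Definition padd (x y : P2) : P2 := ((fst x + fst y)%nat, (snd x + snd y)%nat).
Fixpoint psum (l : list P2) : P2 :=
  match l with nil => z0 | x :: l' => padd x (psum l') end.

Ltac pq := repeat match goal with p : P2 |- _ => destruct p | p : (nat*nat)%type |- _ => destruct p end;
  unfold padd, scale, z0, norm1 in *; simpl in *.

Lemma pair_eq (x y : P2) : fst x = fst y -> snd x = snd y -> x = y.
Proof. destruct x, y; simpl; intros; subst; auto. Qed.

Lemma norm_padd x y : norm1 (padd x y) = (norm1 x + norm1 y)%nat.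
Proof. pq. lia. Qed.

Lemma norm_scale n g : norm1 (scale n g) = (n * norm1 g)%nat.
Proof. pq. lia. Qed.

Lemma nz_norm x : x <> z0 -> (1 <= norm1 x)%nat.
Proof. pq. intros H. destruct n, n0; simpl; try lia. exfalso; apply H; auto. Qed.

Lemma norm_nz x : (1 <= norm1 x)%nat -> x <> z0.
Proof. intros H E; subst; unfold norm1, z0 in H; simpl in H; lia. Qed.

Lemma psum_app l1 l2 : psum (l1 ++ l2) = padd (psum l1) (psum l2).
Proof. induction l1; simpl. - apply pair_eq; pq; lia.
 - rewrite IHl1. apply pair_eq; pq; lia. Qed.

Lemma psum_repeat g n : psum (repeat g n) = scale n g.
Proof. induction n; simpl. - pq. auto. - rewrite IHn. apply pair_eq; pq; lia. Qed.

Lemma gen_by_add G x y : gen_by G x -> gen_by G y -> gen_by G (padd x y).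
Proof.
  intros Hx Hy. induction Hx.
  - replace (padd (0%nat,0%nat) y) with y. auto. apply pair_eq; pq; lia.
  - replace (padd (fst g + fst x, snd g + snd x)%nat y) with
      ((fst g + fst (padd x y))%nat, (snd g + snd (padd x y))%nat).
    constructor; auto. apply pair_eq; pq; lia.
Qed.

Lemma gen_by_one (G : P2 -> Prop) g : G g -> gen_by G g.
Proof. intros H. replace g with ((fst g + fst z0)%nat, (snd g + snd z0)%nat).
  constructor; auto. constructor. apply pair_eq; pq; lia. Qed.

Lemma gen_by_mono (G G' : P2 -> Prop) x : (forall g, G g -> G' g) -> gen_by G x -> gen_by G' x.
Proof. intros H Hx; induction Hx; constructor; auto. Qed.

Lemma gen_in (T G : P2 -> Prop) g : generates T G -> G g -> T g.
Proof. intros H Hg. apply H. apply gen_by_one; auto. Qed.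

Lemma gen_padd (T G : P2 -> Prop) x y : generates T G -> T x -> T y -> T (padd x y).
Proof. intros H Hx Hy. apply H. apply gen_by_add; apply H; auto. Qed.

Lemma gen_z0 (T G : P2 -> Prop) : generates T G -> T z0.
Proof. intros H. apply H. constructor. Qed.

Lemma gen_scale (T G : P2 -> Prop) n g : generates T G -> T g -> T (scale n g).
Proof. intros H Hg. induction n.
  - replace (scale 0 g) with z0. eapply gen_z0; eauto. apply pair_eq; pq; lia.
  - replace (scale (S n) g) with (padd g (scale n g)). eapply gen_padd; eauto.
    apply pair_eq; pq; lia. Qed.

Lemma mg_nonzero T G x : min_gen_system T G -> G x -> x <> z0.
Proof.
  intros [Hg Hmin] Gx E; subst.
  set (G' := fun g => G g /\ g <> z0).
  assert (HG' : generates T G').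
  { intros z; split; intro Hz.
    - apply Hg in Hz. induction Hz. constructor.
      destruct (classic (g = z0)) as [E|E].
      + subst. replace (fst z0 + fst x, snd z0 + snd x)%nat with x; auto. apply pair_eq; pq; lia.
      + constructor; auto. split; auto.
    - apply Hg. eapply gen_by_mono; [|eauto]. intros g [? ?]; auto. }
  assert (G' z0) by (apply (Hmin G'); auto; intros y [? ?]; auto).
  destruct H; auto.
Qed.

Lemma mg_atom T G s : min_gen_system T G -> G s ->
  forall x y, T x -> T y -> s = padd x y -> x = z0 \/ y = z0.
Proof.
  intros [Hg Hmin] Gs x y Tx Ty E.
  destruct (classic (x = z0)) as [|Nx]; auto. destruct (classic (y = z0)) as [|Ny]; auto.
  exfalso.
  set (G' := fun g => G g /\ g <> s).
  assert (Hlt : forall z, gen_by G z -> (norm1 z < norm1 s)%nat -> gen_by G' z).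
  { intros z Hz; induction Hz; intros Hn. constructor.
    constructor. split; auto. intros ->. unfold norm1 in *; simpl in *; lia.
    apply IHHz. unfold norm1 in *; simpl in *; lia. }
  assert (Hx : gen_by G' x). { apply Hlt. apply Hg; auto. subst s. rewrite norm_padd.
    pose proof (nz_norm _ Ny); lia. }
  assert (Hy : gen_by G' y). { apply Hlt. apply Hg; auto. subst s. rewrite norm_padd.
    pose proof (nz_norm _ Nx); lia. }
  assert (HG' : generates T G').
  { intros z; split; intro Hz.
    - apply Hg in Hz. induction Hz. constructor.
      destruct (classic (g = s)) as [E'|E'].
      + subst g. replace (fst s + fst x0, snd s + snd x0)%nat with (padd s x0) by auto.
        rewrite E at 1. replace (padd (padd x y) x0) with (padd x (padd y x0)).
        apply gen_by_add; auto. apply gen_by_add; auto. apply pair_eq; pq; lia.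
      + constructor; auto. split; auto.
    - apply Hg. eapply gen_by_mono; [|eauto]. intros g [? ?]; auto. }
  assert (G' s) by (apply (Hmin G'); auto; intros w [? ?]; auto).
  destruct H; auto.
Qed.

Lemma atom_in_gen T G a : generates T G -> T a -> a <> z0 ->
  (forall x y, T x -> T y -> a = padd x y -> x = z0 \/ y = z0) -> G a.
Proof.
  intros Hg Ta Na Hat. apply Hg in Ta.
  assert (forall z, gen_by G z -> z = a -> G a).
  { intros z Hz; induction Hz; intros E.
    - subst; exfalso; apply Na; auto.
    - destruct (Hat g x) as [E1|E1].
      + eapply gen_in; eauto.
      + apply Hg; auto.
      + rewrite <- E; auto.
      + subst g. apply IHHz. rewrite <- E. apply pair_eq; pq; lia.
      + subst x. replace a with g. auto. rewrite <- E. apply pair_eq; pq; lia. }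
  eauto.
Qed.


Lemma nodup_map_on (X : nat -> P2) (ts : list nat) :
  NoDup ts -> (forall i j, In i ts -> In j ts -> X i = X j -> i = j) -> NoDup (map X ts).
Proof.
  intros Hn Hi. apply NoDup_map_NoDup_ForallPairs; auto.
Qed.

Lemma count_list (L : list P2) (X : nat -> P2) (ts : list nat) (N : nat) :
  NoDup ts -> (forall t, In t ts -> (t < N)%nat) ->
  (forall i j, (i < N)%nat -> (j < N)%nat -> X i = X j -> i = j) ->
  (forall t, In t ts -> In (X t) L) -> (length ts <= length L)%nat.
Proof.
  intros Hn Hb Hi Hin.
  rewrite <- (length_map X). apply NoDup_incl_length.
  - apply nodup_map_on; auto.
  - intros y Hy. apply in_map_iff in Hy. destruct Hy as [t [<- Ht]]. auto.
Qed.

Lemma count_A (L : list P2) (X : nat -> P2) (N : nat) :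
  (forall i j, (i < N)%nat -> (j < N)%nat -> X i = X j -> i = j) ->
  (forall t, (t < N)%nat -> In (X t) L) -> (N <= length L)%nat.
Proof.
  intros Hi Hin. rewrite <- (length_seq N 0).
  apply (count_list L X (seq 0 N) N); auto. apply seq_NoDup.
  intros t Ht; apply in_seq in Ht; lia.
  intros t Ht; apply in_seq in Ht; apply Hin; lia.
Qed.

Lemma filter_or {A} (f g : A -> bool) (l : list A) :
  (forall x, In x l -> f x = true \/ g x = true) ->
  (length l <= length (filter f l) + length (filter g l))%nat.
Proof.
  induction l; simpl; intros H; auto.
  destruct (H a) as [E|E]; auto; rewrite E;
  [destruct (g a)|destruct (f a)]; simpl; specialize (IHl (fun x Hx => H x (or_intror Hx))); lia.
Qed.

Definition decP2 (x y : P2) : {x = y} + {x <> y}.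
Proof. decide equality; apply Nat.eq_dec. Defined.

Lemma count_or (L : list P2) (X Y : nat -> P2) (N : nat) :
  (forall i j, (i < N)%nat -> (j < N)%nat -> X i = X j -> i = j) ->
  (forall i j, (i < N)%nat -> (j < N)%nat -> Y i = Y j -> i = j) ->
  (forall t, (t < N)%nat -> In (X t) L \/ In (Y t) L) -> (N <= 2 * length L)%nat.
Proof.
  intros HX HY Hin.
  set (dec := fun z => if in_dec decP2 z L then true else false).
  assert (Hd : forall z, dec z = true <-> In z L).
  { intros z; unfold dec; destruct in_dec; split; auto; discriminate. }
  pose proof (filter_or (fun t => dec (X t)) (fun t => dec (Y t)) (seq 0 N)) as F.
  rewrite length_seq in F.
  assert (F1 : (length (filter (fun t => dec (X t)) (seq 0 N)) <= length L)%nat).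
  { apply (count_list L X _ N). apply NoDup_filter, seq_NoDup.
    intros t Ht; apply filter_In in Ht; destruct Ht as [Ht _]; apply in_seq in Ht; lia. auto.
    intros t Ht; apply filter_In in Ht; destruct Ht as [_ Ht]; apply Hd; auto. }
  assert (F2 : (length (filter (fun t => dec (Y t)) (seq 0 N)) <= length L)%nat).
  { apply (count_list L Y _ N). apply NoDup_filter, seq_NoDup.
    intros t Ht; apply filter_In in Ht; destruct Ht as [Ht _]; apply in_seq in Ht; lia. auto.
    intros t Ht; apply filter_In in Ht; destruct Ht as [_ Ht]; apply Hd; auto. }
  assert (N <= length (filter (fun t => dec (X t)) (seq 0 N)) + length (filter (fun t => dec (Y t)) (seq 0 N)))%nat.
  { apply F. intros t Ht. apply in_seq in Ht. destruct (Hin t) as [I|I]; try lia;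
    [left|right]; apply Hd; auto. }
  lia.
Qed.


Record Good (C SS : P2 -> Prop) (phi1 phi2 : P2 -> R) (L : list P2) : Prop := {
  C0 : C z0; Cadd : forall x y, C x -> C y -> C (padd x y);
  SC : forall x, SS x -> C x; S0 : SS z0; Sadd : forall x y, SS x -> SS y -> SS (padd x y);
  p1lin : forall x y, phi1 (padd x y) = phi1 x + phi1 y;
  p2lin : forall x y, phi2 (padd x y) = phi2 x + phi2 y;
  p1nn : forall x, C x -> 0 <= phi1 x; p2nn : forall x, C x -> 0 <= phi2 x;
  HInt : forall x, C x -> 0 < phi1 x -> 0 < phi2 x -> SS x \/ In x L;
  HL : forall x, In x L -> ~ SS x }.

Definition Int (C : P2 -> Prop) (phi1 phi2 : P2 -> R) x := C x /\ 0 < phi1 x /\ 0 < phi2 x.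
Definition atomS (SS : P2 -> Prop) s := SS s /\ s <> z0 /\
  forall x y, SS x -> SS y -> s = padd x y -> x = z0 \/ y = z0.

Section Ab.
Context {C SS : P2 -> Prop} {phi1 phi2 : P2 -> R} {L : list P2} (HG : Good C SS phi1 phi2 L).

Lemma padd_z0 : padd z0 z0 = z0. Proof. reflexivity. Qed.

Lemma phi1_z0 : phi1 z0 = 0.
Proof. pose proof (p1lin _ _ _ _ _ HG z0 z0). rewrite padd_z0 in H. lra. Qed.
Lemma phi2_z0 : phi2 z0 = 0.
Proof. pose proof (p2lin _ _ _ _ _ HG z0 z0). rewrite padd_z0 in H. lra. Qed.

Lemma phi1_scale n g : phi1 (scale n g) = INR n * phi1 g.
Proof. induction n. - replace (scale 0 g) with z0 by (apply pair_eq; pq; lia). rewrite phi1_z0; simpl; lra.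
  - replace (scale (Datatypes.S n) g) with (padd g (scale n g)) by (apply pair_eq; pq; lia).
    rewrite (p1lin _ _ _ _ _ HG), IHn, S_INR. lra. Qed.
Lemma phi2_scale n g : phi2 (scale n g) = INR n * phi2 g.
Proof. induction n. - replace (scale 0 g) with z0 by (apply pair_eq; pq; lia). rewrite phi2_z0; simpl; lra.
  - replace (scale (Datatypes.S n) g) with (padd g (scale n g)) by (apply pair_eq; pq; lia).
    rewrite (p2lin _ _ _ _ _ HG), IHn, S_INR. lra. Qed.

Lemma C_scale n g : C g -> C (scale n g).
Proof. intros Hg; induction n. - replace (scale 0 g) with z0 by (apply pair_eq; pq; lia). apply (C0 _ _ _ _ _ HG).
  - replace (scale (Datatypes.S n) g) with (padd g (scale n g)) by (apply pair_eq; pq; lia). apply (Cadd _ _ _ _ _ HG); auto. Qed.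
Lemma S_scale n g : SS g -> SS (scale n g).
Proof. intros Hg; induction n. - replace (scale 0 g) with z0 by (apply pair_eq; pq; lia). apply (S0 _ _ _ _ _ HG).
  - replace (scale (Datatypes.S n) g) with (padd g (scale n g)) by (apply pair_eq; pq; lia). apply (Sadd _ _ _ _ _ HG); auto. Qed.

Lemma C_psum l : Forall C l -> C (psum l).
Proof. induction 1; simpl. apply (C0 _ _ _ _ _ HG). apply (Cadd _ _ _ _ _ HG); auto. Qed.

Lemma Int_add x y : Int C phi1 phi2 x -> C y -> Int C phi1 phi2 (padd x y).
Proof. intros [Cx [h1 h2]] Cy. split. apply (Cadd _ _ _ _ _ HG); auto.
  rewrite (p1lin _ _ _ _ _ HG), (p2lin _ _ _ _ _ HG).
  pose proof (p1nn _ _ _ _ _ HG y Cy); pose proof (p2nn _ _ _ _ _ HG y Cy). lra. Qed.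

Lemma Int_nz x : Int C phi1 phi2 x -> x <> z0.
Proof. intros [_ [h _]] E; subst. rewrite phi1_z0 in h; lra. Qed.

Lemma Int_split s x y : atomS SS s -> Int C phi1 phi2 x -> Int C phi1 phi2 y -> s = padd x y ->
  In x L \/ In y L.
Proof. intros [Ss [Ns Ha]] Ix Iy E.
  destruct (HInt _ _ _ _ _ HG x) as [Sx|]; try apply Ix; auto.
  destruct (HInt _ _ _ _ _ HG y) as [Sy|]; try apply Iy; auto.
  destruct (Ha x y Sx Sy E) as [E'|E']; [apply Int_nz in Ix|apply Int_nz in Iy]; contradiction. Qed.

Lemma firstn_norm_mono (rest : list P2) : Forall (fun e => e <> z0) rest ->
  forall i j, (i < j)%nat -> (j <= length rest)%nat ->
  (norm1 (psum (firstn i rest)) < norm1 (psum (firstn j rest)))%nat.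
Proof.
  induction 1; intros i j Hij Hj; simpl in *. lia.
  destruct j. lia. destruct i; simpl.
  - rewrite norm_padd. pose proof (nz_norm _ H). unfold z0, norm1 at 1; simpl. lia.
  - rewrite !norm_padd. specialize (IHForall i j). lia.
Qed.

Lemma Forall_fs {A} (P : A -> Prop) t l : Forall P l -> Forall P (firstn t l) /\ Forall P (skipn t l).
Proof. intros H. rewrite <- (firstn_skipn t l) in H. apply Forall_app in H; auto. Qed.

Lemma chain s c1 c2 rest : atomS SS s -> Int C phi1 phi2 c1 -> Int C phi1 phi2 c2 ->
  Forall (fun e => C e /\ e <> z0) rest -> s = padd c1 (padd c2 (psum rest)) ->
  (length rest + 1 <= 2 * length L)%nat.
Proof.
  intros As I1 I2 Hr E.
  set (X := fun t => padd c1 (psum (skipn t rest))).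
  set (Y := fun t => padd c2 (psum (firstn t rest))).
  assert (HC : Forall C rest) by (apply (Forall_impl (P := fun e => C e /\ e <> z0)); [intros e [? ?]; auto | exact Hr]).
  assert (Hnz : Forall (fun e => e <> z0) rest) by (apply (Forall_impl (P := fun e => C e /\ e <> z0)); [intros e [? ?]; auto | exact Hr]).
  assert (HXY : forall t, s = padd (X t) (Y t)).
  { intros t. rewrite E. unfold X, Y. rewrite <- (firstn_skipn t rest) at 1. rewrite psum_app.
    apply pair_eq; pq; lia. }
  assert (HY : forall i j, (i < length rest + 1)%nat -> (j < length rest + 1)%nat -> Y i = Y j -> i = j).
  { intros i j Hi Hj Hij. assert (norm1 (Y i) = norm1 (Y j)) by (rewrite Hij; auto).
    unfold Y in H; rewrite !norm_padd in H.
    destruct (Nat.lt_trichotomy i j) as [h|[h|h]]; auto.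
    pose proof (firstn_norm_mono rest Hnz i j h); lia.
    pose proof (firstn_norm_mono rest Hnz j i h); lia. }
  apply count_or with (X := X) (Y := Y); auto.
  - intros i j Hi Hj Hij. apply HY; auto.
    pose proof (HXY i); pose proof (HXY j).
    assert (norm1 (X i) + norm1 (Y i) = norm1 (X j) + norm1 (Y j))%nat.
    { rewrite <- !norm_padd. rewrite <- H, <- H0; auto. }
    rewrite Hij in H1.
    destruct (Nat.lt_trichotomy i j) as [h|[h|h]]; auto.
    pose proof (firstn_norm_mono rest Hnz i j h); unfold Y in H1; rewrite !norm_padd in H1; lia.
    pose proof (firstn_norm_mono rest Hnz j i h); unfold Y in H1; rewrite !norm_padd in H1; lia.
  - intros t Ht. apply (Int_split s); auto.
    + apply Int_add; auto. apply C_psum. apply (Forall_fs C t rest HC).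
    + apply Int_add; auto. apply C_psum. apply (Forall_fs C t rest HC).
Qed.

Lemma ray_lemma s w g lam p : atomS SS s -> Int C phi1 phi2 w -> C g -> g <> z0 -> (1 <= lam)%nat ->
  SS (scale lam g) -> s = padd w (scale p g) -> (p < (length L + 1) * lam)%nat.
Proof.
  intros As Iw Cg Ng Hl Sl E.
  set (N := (p / lam)%nat).
  assert (HN : (N * lam <= p)%nat) by (unfold N; rewrite Nat.mul_comm; apply Nat.Div0.mul_div_le).
  assert (HN2 : (p < (N + 1) * lam)%nat).
  { unfold N. pose proof (Nat.div_mod p lam ltac:(lia)). pose proof (Nat.mod_upper_bound p lam ltac:(lia)). nia. }
  set (X := fun t => padd w (scale (p - (Datatypes.S t) * lam) g)).
  assert (Hcount : (N <= length L)%nat).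
  { apply count_A with (X := X).
    - intros i j Hi Hj Hij. assert (norm1 (X i) = norm1 (X j)) by (rewrite Hij; auto).
      unfold X in H; rewrite !norm_padd, !norm_scale in H. pose proof (nz_norm _ Ng).
      assert (p - Datatypes.S i * lam = p - Datatypes.S j * lam)%nat by nia. nia.
    - intros t Ht. 
      assert (Ss : SS s) by apply As.
      destruct (HInt _ _ _ _ _ HG (X t)) as [Sx|]; try (apply Int_add; auto; apply C_scale; auto); auto.
      exfalso. destruct As as [_ [_ Ha]].
      assert (Sy : SS (scale (Datatypes.S t * lam) g)).
      { replace (scale (Datatypes.S t * lam) g) with (scale (Datatypes.S t) (scale lam g)) by (apply pair_eq; pq; lia).
        apply S_scale; auto. }
      destruct (Ha (X t) (scale (Datatypes.S t * lam) g)) as [Z|Z]; auto.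
      + rewrite E. unfold X. apply pair_eq; pq; nia.
      + apply (Int_nz (X t)); auto. apply Int_add; auto. apply C_scale; auto.
      + apply norm_nz in Z; auto. rewrite norm_scale. pose proof (nz_norm _ Ng). nia. }
  nia.
Qed.

End Ab.


Lemma Good_swap C SS phi1 phi2 L : Good C SS phi1 phi2 L -> Good C SS phi2 phi1 L.
Proof. intros []; constructor; auto. Qed.

Lemma pow3 l : (2 * l + 1 <= 3 ^ l)%nat.
Proof. induction l; simpl; lia. Qed.



Lemma Forall_repeat_nz (C : P2 -> Prop) g n : (g = z0 -> n = 0%nat) -> (g <> z0 -> C g) ->
  Forall (fun e => C e /\ e <> z0) (repeat g n).
Proof. intros H1 H2. destruct (classic (g = z0)) as [E|E].
  - rewrite (H1 E); constructor.
  - apply Forall_forall. intros x Hx. apply repeat_spec in Hx. subst. auto. Qed.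

Lemma ar T l k x : (x <= (2 * l + 1) * (2 * k - 1))%nat -> (2 * l + 1 <= T)%nat -> (x <= T * (2 * k - 1))%nat.
Proof. intros H1 H2. eapply Nat.le_trans; [exact H1|]. apply Nat.mul_le_mono_r; auto. Qed.

Ltac fin k := cbn [length] in *; let e := fresh in assert (e : (2*k-1 = k + (k-1))%nat) by lia; rewrite ?e; nia.

Section Ab2.
Context {C SS : P2 -> Prop} {phi1 phi2 : P2 -> R} {L : list P2} (HG : Good C SS phi1 phi2 L).

Lemma bound_list (l0 : list P2) : (forall e, In e l0 -> 0 < phi1 e \/ (phi1 e = 0 /\ phi2 e = 0)) ->
  exists B, 0 <= B /\ forall e, In e l0 -> phi2 e <= B * phi1 e.
Proof.
  induction l0; intros H. exists 0; split; [lra|]; intros e [].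
  destruct IHl0 as [B [HB HB']]. intros; apply H; simpl; auto.
  destruct (H a) as [h|[h1 h2]]; simpl; auto.
  - exists (Rmax B (phi2 a / phi1 a)). split. apply Rle_trans with B; auto; apply Rmax_l.
    intros e [<-|He].
    + apply Rle_trans with ((phi2 a / phi1 a) * phi1 a). right; field; lra.
      apply Rmult_le_compat_r. lra. apply Rmax_r.
    + apply Rle_trans with (B * phi1 e); auto. apply Rmult_le_compat_r. 
      destruct (H e) as [|[]]; simpl; auto; lra. apply Rmax_l.
  - exists B; split; auto. intros e [<-|He]; auto. rewrite h1, h2; lra.
Qed.

Lemma lambda_exists (L0 : list P2) g w :
  (forall x, SS x <-> gen_by (fun x => In x L0) x) ->
  C g -> g <> z0 -> phi1 g = 0 -> 0 < phi2 g ->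
  (forall x, C x -> phi1 x = 0 -> exists n, x = scale n g) ->
  Int C phi1 phi2 w -> exists n, (1 <= n)%nat /\ SS (scale n g).
Proof.
  intros Hfg Cg Ng h1 h2 Hray Iw.
  apply NNPP; intros Hno.
  assert (Hl0 : forall e, In e L0 -> 0 < phi1 e \/ (phi1 e = 0 /\ phi2 e = 0)).
  { intros e He. assert (Se : SS e) by (apply Hfg; apply gen_by_one; auto).
    pose proof (SC _ _ _ _ _ HG e Se) as Ce.
    destruct (Rle_lt_or_eq_dec 0 (phi1 e)) as [|E]; auto. apply (p1nn _ _ _ _ _ HG); auto.
    right. destruct (Hray e Ce (eq_sym E)) as [n ->].
    destruct n. replace (scale 0 g) with z0 by (apply pair_eq; pq; nia).
    rewrite (phi1_z0 HG), (phi2_z0 HG); auto.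
    exfalso; apply Hno; exists (S n); split; auto; lia. }
  destruct (bound_list L0 Hl0) as [B [HB HB']].
  assert (Hgen : forall z, gen_by (fun x => In x L0) z -> phi2 z <= B * phi1 z).
  { intros z Hz; induction Hz.
    - change (0%nat, 0%nat) with z0. rewrite (phi1_z0 HG), (phi2_z0 HG); lra.
    - change (fst g0 + fst x, snd g0 + snd x)%nat with (padd g0 x).
      rewrite (p1lin _ _ _ _ _ HG), (p2lin _ _ _ _ _ HG). specialize (HB' g0 H). nra. }
  destruct (INR_archimed (phi2 g) (B * phi1 w) ltac:(lra)) as [J HJ].
  set (X := fun t => padd w (scale (J + t) g)).
  assert (HN : (length L + 1 <= length L)%nat).
  { apply count_A with (X := X).
    - intros i j Hi Hj Hij. assert (norm1 (X i) = norm1 (X j)) by (rewrite Hij; auto).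
      unfold X in H; rewrite !norm_padd, !norm_scale in H. pose proof (nz_norm _ Ng). nia.
    - intros t Ht. assert (IX : Int C phi1 phi2 (X t)) by (apply (Int_add HG); auto; apply (C_scale HG); auto).
      destruct IX as [CX [p1 p2]].
      destruct (HInt _ _ _ _ _ HG (X t) CX p1 p2) as [SX|]; auto. exfalso.
      apply Hfg in SX. apply Hgen in SX. unfold X in SX.
      rewrite (p1lin _ _ _ _ _ HG), (p2lin _ _ _ _ _ HG), (phi1_scale HG), (phi2_scale HG), plus_INR in SX.
      destruct Iw as [_ [w1 w2]]. pose proof (pos_INR t). rewrite h1 in SX. nra. }
  lia.
Qed.

Lemma Int_g12 g1 g2 : (C g1 /\ phi1 g1 = 0 /\ 0 < phi2 g1) -> (C g2 /\ phi2 g2 = 0 /\ 0 < phi1 g2) ->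
  Int C phi1 phi2 (padd g1 g2).
Proof. intros [c1 [a1 b1]] [c2 [a2 b2]]. split. apply (Cadd _ _ _ _ _ HG); auto.
  rewrite (p1lin _ _ _ _ _ HG), (p2lin _ _ _ _ _ HG). lra. Qed.

Lemma interior_bound s Lint p q g1 g2 k :
  atomS SS s -> Int C phi1 phi2 s -> Forall (Int C phi1 phi2) Lint ->
  s = padd (psum Lint) (padd (scale p g1) (scale q g2)) ->
  (g1 = z0 -> p = 0%nat) -> (g2 = z0 -> q = 0%nat) ->
  (g1 <> z0 -> C g1 /\ phi1 g1 = 0 /\ 0 < phi2 g1) ->
  (g2 <> z0 -> C g2 /\ phi2 g2 = 0 /\ 0 < phi1 g2) ->
  (g1 <> z0 -> exists lam, (1 <= lam <= k)%nat /\ SS (scale lam g1)) ->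
  (g2 <> z0 -> exists lam, (1 <= lam <= k)%nat /\ SS (scale lam g2)) ->
  (1 <= k)%nat ->
  (length Lint + p + q <= 3 ^ length L * (2 * k - 1))%nat.
Proof.
  intros As Is HLint E Hp Hq G1 G2 L1 L2 Hk.
  pose proof (pow3 (length L)) as P3. apply (ar _ (length L)); [|exact P3]. set (ll := length L) in *.
  assert (Hp1 : (1 <= p)%nat -> g1 <> z0) by (intros h e; apply Hp in e; lia).
  assert (Hq1 : (1 <= q)%nat -> g2 <> z0) by (intros h e; apply Hq in e; lia).
  destruct Lint as [|c [|c2 rest]].
  -
    simpl in E.
    destruct (Nat.eq_dec p 0) as [P0|P0].
    { exfalso. subst p. destruct Is as [_ [_ h]].
      assert (phi2 (scale q g2) = 0).
      { destruct (classic (g2 = z0)) as [e|e]. rewrite e. replace (scale q z0) with z0 by (apply pair_eq; pq; nia).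
        apply (phi2_z0 HG). rewrite (phi2_scale HG). destruct (G2 e) as [_ [-> _]]; lra. }
      rewrite E in h. replace (padd z0 (padd (scale 0 g1) (scale q g2))) with (scale q g2) in h
        by (apply pair_eq; pq; nia). lra. }
    destruct (Nat.eq_dec q 0) as [Q0|Q0].
    { exfalso. subst q. destruct Is as [_ [h _]].
      assert (phi1 (scale p g1) = 0).
      { rewrite (phi1_scale HG). destruct (G1 (Hp1 ltac:(lia))) as [_ [-> _]]; lra. }
      rewrite E in h. replace (padd z0 (padd (scale p g1) (scale 0 g2))) with (scale p g1) in h
        by (apply pair_eq; pq; nia). lra. }
    assert (n1 : g1 <> z0) by (apply Hp1; lia). assert (n2 : g2 <> z0) by (apply Hq1; lia).
    destruct (L1 n1) as [l1 [Hl1 S1]]. destruct (L2 n2) as [l2 [Hl2 S2]].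
    assert (I12 : Int C phi1 phi2 (padd g1 g2)) by (apply Int_g12; auto).
    destruct (Nat.eq_dec k 1) as [K1|K1].
    { exfalso. assert (l1 = 1%nat) by lia. assert (l2 = 1%nat) by lia. subst l1 l2.
      replace (scale 1 g1) with g1 in S1 by (apply pair_eq; pq; nia).
      replace (scale 1 g2) with g2 in S2 by (apply pair_eq; pq; nia).
      destruct As as [_ [_ Ha]].
      destruct (Ha (scale p g1) (scale q g2)) as [Z|Z].
      apply (S_scale HG); auto. apply (S_scale HG); auto.
      rewrite E; apply pair_eq; pq; nia.
      apply norm_nz in Z; auto; rewrite norm_scale; pose proof (nz_norm _ n1); nia.
      apply norm_nz in Z; auto; rewrite norm_scale; pose proof (nz_norm _ n2); nia. }
    destruct (Nat.eq_dec p 1) as [P1|P1].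
    { subst p. pose proof (ray_lemma HG s (padd g1 g2) g2 l2 (q - 1) As I12 (proj1 (G2 n2)) n2 ltac:(lia) S2) as R.
      assert (q - 1 < (ll + 1) * l2)%nat. apply R. rewrite E; apply pair_eq; pq; nia. fin k. }
    destruct (Nat.eq_dec q 1) as [Q1|Q1].
    { subst q. pose proof (ray_lemma HG s (padd g1 g2) g1 l1 (p - 1) As I12 (proj1 (G1 n1)) n1 ltac:(lia) S1) as R.
      assert (p - 1 < (ll + 1) * l1)%nat. apply R. rewrite E; apply pair_eq; pq; nia. fin k. }
    pose proof (chain HG s (padd g1 g2) (padd g1 g2) (repeat g1 (p - 2) ++ repeat g2 (q - 2)) As I12 I12) as R.
    rewrite length_app, !repeat_length in R. 
    assert (p - 2 + (q - 2) + 1 <= 2 * ll)%nat; [|fin k].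
    apply R. apply Forall_app; split; apply Forall_repeat_nz.
    intros e; contradiction. intros _; apply (G1 n1). intros e; contradiction. intros _; apply (G2 n2).
    rewrite psum_app, !psum_repeat. rewrite E. apply pair_eq; pq; nia.
  -
    pose proof (Forall_inv HLint) as Ic.
    simpl in E. 
    destruct (Nat.eq_dec p 0) as [P0|P0]; destruct (Nat.eq_dec q 0) as [Q0|Q0].
    + fin k.
    + subst p. assert (n2 : g2 <> z0) by (apply Hq1; lia). destruct (L2 n2) as [l2 [Hl2 S2]].
      pose proof (ray_lemma HG s c g2 l2 q As Ic (proj1 (G2 n2)) n2 ltac:(lia) S2) as R.
      assert (q < (ll + 1) * l2)%nat. apply R. rewrite E; apply pair_eq; pq; nia. assert (q + 1 <= (ll+1)*k)%nat by nia. fin k.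
    + subst q. assert (n1 : g1 <> z0) by (apply Hp1; lia). destruct (L1 n1) as [l1 [Hl1 S1]].
      pose proof (ray_lemma HG s c g1 l1 p As Ic (proj1 (G1 n1)) n1 ltac:(lia) S1) as R.
      assert (p < (ll + 1) * l1)%nat. apply R. rewrite E; apply pair_eq; pq; nia. assert (p + 1 <= (ll+1)*k)%nat by nia. fin k.
    + assert (n1 : g1 <> z0) by (apply Hp1; lia). assert (n2 : g2 <> z0) by (apply Hq1; lia).
      destruct (L1 n1) as [l1 [Hl1 S1]]. destruct (L2 n2) as [l2 [Hl2 S2]].
      destruct (Nat.eq_dec k 1) as [K1|K1].
      * assert (l1 = 1%nat) by lia. assert (l2 = 1%nat) by lia. subst l1 l2.
        assert (I1 : Int C phi1 phi2 (padd c (scale q g2))) by (apply (Int_add HG); auto; apply (C_scale HG); apply (G2 n2)).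
        assert (I2 : Int C phi1 phi2 (padd c (scale p g1))) by (apply (Int_add HG); auto; apply (C_scale HG); apply (G1 n1)).
        pose proof (ray_lemma HG s _ g1 1 p As I1 (proj1 (G1 n1)) n1 ltac:(lia) S1) as R1.
        pose proof (ray_lemma HG s _ g2 1 q As I2 (proj1 (G2 n2)) n2 ltac:(lia) S2) as R2.
        assert (p < (ll + 1) * 1)%nat. apply R1. rewrite E; apply pair_eq; pq; nia.
        assert (q < (ll + 1) * 1)%nat. apply R2. rewrite E; apply pair_eq; pq; nia.
        fin k.
      * assert (I12 : Int C phi1 phi2 (padd g1 g2)) by (apply Int_g12; auto).
        pose proof (chain HG s c (padd g1 g2) (repeat g1 (p - 1) ++ repeat g2 (q - 1)) As Ic I12) as R.
        rewrite length_app, !repeat_length in R.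
        assert (p - 1 + (q - 1) + 1 <= 2 * ll)%nat; [|fin k].
        apply R. apply Forall_app; split; apply Forall_repeat_nz.
        intros e; contradiction. intros _; apply (G1 n1). intros e; contradiction. intros _; apply (G2 n2).
        rewrite psum_app, !psum_repeat. rewrite E. apply pair_eq; pq; nia.
  -
    pose proof (Forall_inv HLint) as Ic. pose proof (Forall_inv_tail HLint) as HL2. pose proof (Forall_inv HL2) as Ic2. pose proof (Forall_inv_tail HL2) as HL3.
    pose proof (chain HG s c c2 (rest ++ repeat g1 p ++ repeat g2 q) As Ic Ic2) as R.
    rewrite !length_app, !repeat_length in R. 
    assert (length rest + (p + q) + 1 <= 2 * ll)%nat; [|fin k].
    apply R.
    + apply Forall_app; split.
      * apply (Forall_impl (P := Int C phi1 phi2)); auto. intros e Ie; split. apply Ie. apply (Int_nz HG); auto.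
      * apply Forall_app; split; apply Forall_repeat_nz; auto.
        intros n1; apply (G1 n1). intros n2; apply (G2 n2).
    + rewrite !psum_app, !psum_repeat. rewrite E. simpl. apply pair_eq; pq; nia.
Qed.
End Ab2.


Lemma qcomb_app l1 l2 : qcomb (l1 ++ l2) = (fst (qcomb l1) + fst (qcomb l2), snd (qcomb l1) + snd (qcomb l2)).
Proof. induction l1 as [|[q x] l1 IH]; simpl. - destruct (qcomb l2); simpl; f_equal; ring.
  - rewrite IH; simpl; f_equal; ring. Qed.

Lemma LQ_add A x y : LQ A x -> LQ A y -> LQ A (fst x + fst y, snd x + snd y).
Proof. intros [l1 [H1 ->]] [l2 [H2 ->]]. exists (l1 ++ l2). split.
  intros qa Hq; apply in_app_or in Hq; destruct Hq; auto. rewrite qcomb_app; auto. Qed.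

Lemma Q2R_nonneg q : (0 <= q)%Q -> 0 <= Q2R q.
Proof. intros H; apply Qle_Rle in H. replace (Q2R 0) with 0 in H; auto. unfold Q2R; simpl; field. Qed.

Lemma cone_nonneg a b r x : cone_of_disk a b r x -> 0 <= fst x /\ 0 <= snd x.
Proof. intros [l [H ->]]. induction l as [|[q y] l IH]; simpl. lra.
  destruct (H (q, y)) as [Hq [_ [Hy1 Hy2]]]; simpl; auto. simpl in *.
  destruct IH as [I1 I2]. intros; apply H; simpl; auto.
  apply Q2R_nonneg in Hq. split; nra. Qed.

Lemma embed_padd x y : embed (padd x y) = (fst (embed x) + fst (embed y), snd (embed x) + snd (embed y)).
Proof. unfold embed, padd; simpl; rewrite !plus_INR; auto. Qed.

Lemma embed_z0 : embed z0 = (0, 0).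
Proof. reflexivity. Qed.

Lemma C_z0 a b r : cone_semigroup a b r z0.
Proof. exists nil; split. intros _ []. reflexivity. Qed.

Lemma C_add a b r x y : cone_semigroup a b r x -> cone_semigroup a b r y -> cone_semigroup a b r (padd x y).
Proof. unfold cone_semigroup, cone_of_disk; intros. rewrite embed_padd. apply LQ_add; auto. Qed.

Lemma S_in_C a b r x : 0 < r -> circle_semigroup a b r x -> cone_semigroup a b r x.
Proof.
  intros hr [i Hi]. unfold disk, embed in Hi; simpl in Hi. destruct x as [x1 x2]; simpl in Hi.
  pose proof (pos_INR x1); pose proof (pos_INR x2).
  destruct i as [|i].
  - simpl in Hi. assert (INR x1 = 0) by nra. assert (INR x2 = 0) by nra.
    assert (x1 = 0%nat) by (apply INR_eq; auto). assert (x2 = 0%nat) by (apply INR_eq; auto). subst.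
    apply C_z0.
  - set (n := INR (S i)) in *. assert (hn : 0 < n) by (apply lt_0_INR; lia).
    exists ((inject_Z (Z.of_nat (S i)), (INR x1 / n, INR x2 / n)) :: nil). split.
    + intros qa [<-|[]]; simpl. split. unfold Qle; simpl; lia.
      split.
      * unfold disk; simpl.
        apply Rmult_le_reg_l with (n ^ 2). nra.
        apply Rle_trans with ((INR x1 - n*a)*((INR x1 - n*a)*1) + (INR x2 - n*b)*((INR x2 - n*b)*1)).
        right; field; lra. eapply Rle_trans; [exact Hi|]. right; ring.
      * unfold nonneg_quadrant; simpl; split; (apply Rmult_le_pos; [lra|apply Rlt_le, Rinv_0_lt_compat; lra]).
    + assert (Hq : Q2R (inject_Z (Z.of_nat (S i))) = n).
      { unfold Q2R, n; simpl Qnum; simpl Qden. rewrite INR_IZR_INZ, Rinv_1, Rmult_1_r. reflexivity. }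
      simpl in Hq. unfold embed; simpl. rewrite Hq. f_equal; field; lra.
Qed.

Lemma extremal_sign K u : is_extremal_ray K u ->
  exists sg, (sg = 1 \/ sg = -1) /\ forall x, K x -> 0 <= sg * det u x.
Proof. intros [_ [_ [H|H]]]. exists 1; split; auto; intros x Hx; specialize (H x Hx); lra.
  exists (-1); split; auto; intros x Hx; specialize (H x Hx); lra. Qed.

Lemma extremal_nonneg a b r u : is_extremal_ray (cone_of_disk a b r) u -> 0 <= fst u /\ 0 <= snd u.
Proof.
  intros [_ [H _]]. assert (Hr : ray u u) by (exists 1; split; [lra|destruct u; simpl; f_equal; ring]).
  specialize (H u Hr). split; apply Rnot_lt_le; intros Hn.
  - destruct (H (- fst u) ltac:(lra)) as [y [Hy Hd]]. apply cone_nonneg in Hy.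
    pose proof (Rabs_pos (snd u - snd y)). unfold Rabs in Hd at 1; destruct Rcase_abs in Hd; lra.
  - destruct (H (- snd u) ltac:(lra)) as [y [Hy Hd]]. apply cone_nonneg in Hy.
    pose proof (Rabs_pos (fst u - fst y)). unfold Rabs in Hd at 2; destruct Rcase_abs in Hd; lra.
Qed.

Lemma ray_det u x : ray u x -> det u x = 0.
Proof. intros [t [_ ->]]; unfold det; simpl; ring. Qed.

Lemma det_ray u x : 0 <= fst u -> 0 <= snd u -> u <> (0, 0) -> 0 <= fst x -> 0 <= snd x ->
  det u x = 0 -> ray u x.
Proof.
  destruct u as [u1 u2], x as [x1 x2]; unfold det; simpl; intros h1 h2 hn h3 h4 hd.
  destruct (Rle_lt_or_eq_dec 0 u1 h1) as [p1|p1].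
  - exists (x1 / u1). split. apply Rmult_le_pos; [lra|apply Rlt_le, Rinv_0_lt_compat; lra]. f_equal; simpl. field; lra.
    apply Rmult_eq_reg_l with u1; [|lra]. field_simplify; lra.
  - subst u1. assert (u2 <> 0) by (intro; subst; apply hn; auto).
    assert (x1 = 0) by (assert (u2 * x1 = 0) by lra; apply Rmult_integral in H0; destruct H0; lra).
    subst. exists (x2 / u2). split. apply Rmult_le_pos; [lra|apply Rlt_le, Rinv_0_lt_compat; lra]. f_equal; simpl. ring. field; auto.
Qed.

Lemma embed_nz x : x <> z0 -> embed x <> (0, 0).
Proof. destruct x as [x1 x2]; unfold embed; simpl; intros H E. injection E; intros.
  apply H. unfold z0. f_equal; apply INR_eq; simpl; auto. Qed.

Lemma rays_same u1 u2 x : ray u1 (embed x) -> ray u2 (embed x) -> x <> z0 ->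
  forall y, ray u1 y <-> ray u2 y.
Proof.
  intros [t1 [h1 E1]] [t2 [h2 E2]] Nx. apply embed_nz in Nx. rewrite E1 in E2, Nx.
  destruct u1 as [a1 b1], u2 as [a2 b2]; simpl in *. injection E2; intros F2 F1.
  assert (t1 <> 0) by (intro; subst; apply Nx; f_equal; ring).
  assert (t2 <> 0) by (intro; subst; apply Nx; rewrite F1, F2; f_equal; ring).
  assert (t1 > 0) by (destruct h1; auto; subst; exfalso; auto).
  assert (t2 > 0) by (destruct h2; auto; subst; exfalso; auto).
  intros y; split; intros [t [ht ->]]; simpl.
  - exists (t * t2 / t1). split. apply Rmult_le_pos; [nra|]. apply Rlt_le, Rinv_0_lt_compat; lra.
    simpl. f_equal.
    + apply Rmult_eq_reg_l with t1; auto. replace (t1 * (t*t2/t1*a2)) with (t * (t2*a2)) by (field; auto).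
      rewrite <- F1; ring.
    + apply Rmult_eq_reg_l with t1; auto. replace (t1 * (t*t2/t1*b2)) with (t * (t2*b2)) by (field; auto).
      rewrite <- F2; ring.
  - exists (t * t1 / t2). split. apply Rmult_le_pos; [nra|]. apply Rlt_le, Rinv_0_lt_compat; lra.
    simpl. f_equal.
    + apply Rmult_eq_reg_l with t2; auto. replace (t2 * (t*t1/t2*a1)) with (t * (t1*a1)) by (field; auto).
      rewrite F1; ring.
    + apply Rmult_eq_reg_l with t2; auto. replace (t2 * (t*t1/t2*b1)) with (t * (t1*b1)) by (field; auto).
      rewrite F2; ring.
Qed.


Lemma min_nat (P : nat -> Prop) n : P n -> exists m, P m /\ forall j, (j < m)%nat -> ~ P j.
Proof.
  revert P. induction n as [n IH] using (well_founded_induction lt_wf). intros P Pn.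
  destruct (classic (exists j, (j < n)%nat /\ P j)) as [[j [Hj Pj]]|Hno].
  - apply (IH j Hj P Pj).
  - exists n; split; auto. intros j Hj Pj; apply Hno; eauto.
Qed.

Lemma scale_z0 n : scale n z0 = z0.
Proof. apply pair_eq; pq; lia. Qed.

Lemma lam_bound C SS phiA phiB L L0 (u : pt) g w (Gj : P2 -> Prop) k :
  Good C SS phiA phiB L ->
  (forall x, SS x <-> gen_by (fun x => In x L0) x) ->
  (forall p, (C p /\ ray u (embed p)) <-> exists n, p = scale n g) ->
  (forall x, C x -> (ray u (embed x) <-> phiA x = 0)) ->
  g <> z0 -> 0 < phiB g ->
  Int C phiA phiB w ->
  generates (fun p => SS p /\ ray u (embed p)) Gj ->
  (forall lam, Gj (scale lam g) -> (lam <= k)%nat) ->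
  exists lam, (1 <= lam <= k)%nat /\ SS (scale lam g).
Proof.
  intros HG Hfg Hgr Hra Ng Pb Iw HGj Hk.
  assert (Cg : C g /\ ray u (embed g)). { apply Hgr. exists 1%nat. apply pair_eq; pq; lia. }
  destruct Cg as [Cg Rg].
  assert (Hray : forall x, C x -> phiA x = 0 -> exists n, x = scale n g).
  { intros x Cx E. apply Hgr. split; auto. apply Hra; auto. }
  destruct (lambda_exists HG L0 g w Hfg Cg Ng (proj1 (Hra g Cg) Rg) Pb Hray Iw) as [n [Hn Sn]].
  destruct (min_nat (fun j => (1 <= j)%nat /\ SS (scale j g)) n (conj Hn Sn)) as [m [[Hm Sm] Hmin]].
  exists m. split; auto. split; auto. apply Hk.
  apply (atom_in_gen _ _ _ HGj).
  - split; auto. apply Hgr. eauto.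
  - apply norm_nz. rewrite norm_scale. pose proof (nz_norm _ Ng). nia.
  - intros x y [Sx Rx] [Sy Ry] E.
    destruct (proj1 (Hgr x) (conj (SC _ _ _ _ _ HG x Sx) Rx)) as [a ->].
    destruct (proj1 (Hgr y) (conj (SC _ _ _ _ _ HG y Sy) Ry)) as [b ->].
    assert (norm1 (scale m g) = norm1 (padd (scale a g) (scale b g))) by (rewrite E; auto).
    rewrite norm_padd, !norm_scale in H. pose proof (nz_norm _ Ng).
    destruct a. left; apply pair_eq; pq; lia.
    destruct b. right; apply pair_eq; pq; lia.
    exfalso. apply (Hmin (Datatypes.S a)). nia. split; auto. lia.
Qed.


Lemma norm_psum_le M Lint : Forall (fun c => (norm1 c <= M)%nat) Lint -> (norm1 (psum Lint) <= length Lint * M)%nat.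
Proof. induction 1; simpl. unfold norm1; simpl; lia. rewrite norm_padd. lia. Qed.

Theorem corollary5p1 (a b r : R) (u1 u2 : pt) (g1 g2 : nat * nat) (M l k : nat) :
  0 < r ->
  finitely_generated (circle_semigroup a b r) ->
  (* tau_j = ray u_j are the two extremal rays of the cone *)
  is_extremal_ray (cone_of_disk a b r) u1 ->
  is_extremal_ray (cone_of_disk a b r) u2 ->
  ~ (forall x, ray u1 x <-> ray u2 x) ->
  (* \mathcal C ∩ tau_j = N g_j *)
  (forall p, (cone_semigroup a b r p /\ ray u1 (embed p)) <-> exists n, p = scale n g1) ->
  (forall p, (cone_semigroup a b r p /\ ray u2 (embed p)) <-> exists n, p = scale n g2) ->
  (* M = max ||g||_1 over the minimal system of generators of \mathcal C *)
  (exists GC, min_gen_system (cone_semigroup a b r) GC /\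
     (exists g, GC g /\ norm1 g = M) /\ (forall g, GC g -> (norm1 g <= M)%nat)) ->
  (* l = #( int(\mathcal C) \ int(S) ) *)
  (exists L : list (nat * nat), NoDup L /\ length L = l /\
     forall p, In p L <->
       (interior_pts u1 u2 (cone_semigroup a b r) p /\
        ~ interior_pts u1 u2 (circle_semigroup a b r) p)) ->
  (* k = max of lambda with lambda g_j a minimal generator of S ∩ tau_j *)
  (let P (lam : nat) :=
     exists G1, min_gen_system (fun p => circle_semigroup a b r p /\ ray u1 (embed p)) G1 /\
     exists G2, min_gen_system (fun p => circle_semigroup a b r p /\ ray u2 (embed p)) G2 /\
     (G1 (scale lam g1) \/ G2 (scale lam g2)) in
   P k /\ forall lam, P lam -> (lam <= k)%nat) ->
  forall GS, min_gen_system (circle_semigroup a b r) GS ->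
  forall s, GS s -> (norm1 s <= 3 ^ l * (2 * k - 1) * M)%nat.
Proof.
  intros hr [L0 HL0] Ex1 Ex2 Hdist Hg1 Hg2 [GC [HGC [_ HM]]] [L [HnD [Hl HL]]] Hk GS HGS s Gs.
  cbv zeta in Hk. destruct Hk as [[G1 [HG1 [G2 [HG2 Hkk]]]] Hmax].
  set (Cc := cone_semigroup a b r) in *. set (Sc := circle_semigroup a b r) in *.
  destruct (extremal_sign _ _ Ex1) as [sg1 [Hsg1 Hs1]].
  destruct (extremal_sign _ _ Ex2) as [sg2 [Hsg2 Hs2]].
  destruct (extremal_nonneg _ _ _ _ Ex1) as [u1a u1b].
  destruct (extremal_nonneg _ _ _ _ Ex2) as [u2a u2b].
  assert (u1n : u1 <> (0, 0)) by apply Ex1. assert (u2n : u2 <> (0, 0)) by apply Ex2.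
  set (phi1 := fun p => sg1 * det u1 (embed p)). set (phi2 := fun p => sg2 * det u2 (embed p)).
  assert (Hr1 : forall x, Cc x -> (ray u1 (embed x) <-> phi1 x = 0)).
  { intros x Cx; split; intro H. unfold phi1; rewrite ray_det; auto; ring.
    assert (D : det u1 (embed x) = 0) by (unfold phi1 in H; destruct Hsg1; subst; lra).
    apply det_ray; auto; unfold embed; simpl; apply pos_INR. }
  assert (Hr2 : forall x, Cc x -> (ray u2 (embed x) <-> phi2 x = 0)).
  { intros x Cx; split; intro H. unfold phi2; rewrite ray_det; auto; ring.
    assert (D : det u2 (embed x) = 0) by (unfold phi2 in H; destruct Hsg2; subst; lra).
    apply det_ray; auto; unfold embed; simpl; apply pos_INR. }
  assert (HG : Good Cc Sc phi1 phi2 L).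
  { constructor.
    - apply C_z0.
    - apply C_add.
    - intros x; apply S_in_C; auto.
    - apply HL0. constructor.
    - intros x y; apply gen_padd with (G := fun x => In x L0); auto.
    - intros x y; unfold phi1; rewrite embed_padd; unfold det; simpl; ring.
    - intros x y; unfold phi2; rewrite embed_padd; unfold det; simpl; ring.
    - intros x Cx; apply Hs1; auto.
    - intros x Cx; apply Hs2; auto.
    - intros x Cx h1 h2. destruct (classic (Sc x)) as [Sx|Sx]; [left; auto|right].
      apply HL. split.
      + split; auto. split; intro R; [apply Hr1 in R|apply Hr2 in R]; auto; lra.
      + intros [Sx' _]; auto.
    - intros x Hx Sx. apply HL in Hx. destruct Hx as [[Cx [R1 R2]] Hn]. apply Hn. split; auto. }
  assert (As : atomS Sc s).
  { split. eapply gen_in; [apply HGS|]; auto. split. eapply mg_nonzero; eauto.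
    intros x y Sx Sy E. eapply mg_atom; eauto. }
  assert (Cs : Cc s) by (apply (SC _ _ _ _ _ HG); apply As).
  assert (Hk1 : (1 <= k)%nat).
  { destruct k; [|lia]. exfalso. destruct Hkk as [H|H].
    - apply (mg_nonzero _ _ _ HG1 H). apply pair_eq; pq; lia.
    - apply (mg_nonzero _ _ _ HG2 H). apply pair_eq; pq; lia. }
  assert (Hm1 : forall lam, G1 (scale lam g1) -> (lam <= k)%nat).
  { intros lam H; apply Hmax. exists G1; split; auto. exists G2; split; auto. }
  assert (Hm2 : forall lam, G2 (scale lam g2) -> (lam <= k)%nat).
  { intros lam H; apply Hmax. exists G1; split; auto. exists G2; split; auto. }
  assert (Cg1 : Cc g1 /\ ray u1 (embed g1)) by (apply Hg1; exists 1%nat; apply pair_eq; pq; lia).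
  assert (Cg2 : Cc g2 /\ ray u2 (embed g2)) by (apply Hg2; exists 1%nat; apply pair_eq; pq; lia).
  assert (F1 : g1 <> z0 -> Cc g1 /\ phi1 g1 = 0 /\ 0 < phi2 g1).
  { intros N. destruct Cg1 as [C1 R1]. split; auto. split. apply Hr1; auto.
    destruct (Rle_lt_or_eq_dec 0 (phi2 g1)) as [|E]; auto. apply Hs2; auto.
    exfalso. apply Hdist. apply (rays_same _ _ g1); auto. apply Hr2; auto. }
  assert (F2 : g2 <> z0 -> Cc g2 /\ phi2 g2 = 0 /\ 0 < phi1 g2).
  { intros N. destruct Cg2 as [C2 R2]. split; auto. split. apply Hr2; auto.
    destruct (Rle_lt_or_eq_dec 0 (phi1 g2)) as [|E]; auto. apply Hs1; auto.
    exfalso. apply Hdist. apply (rays_same _ _ g2); auto. apply Hr1; auto. }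
  assert (Natom : forall g (phiA : P2 -> R) u, (forall p, (Cc p /\ ray u (embed p)) <-> exists n, p = scale n g) ->
     (forall x, Cc x -> (ray u (embed x) <-> phiA x = 0)) ->
     (forall x y, phiA (padd x y) = phiA x + phiA y) -> (forall x, Cc x -> 0 <= phiA x) ->
     (norm1 g <= M)%nat).
  { intros g phiA u Hg Hra Hlin Hnn.
    destruct (classic (g = z0)) as [->|Ng]. unfold norm1, z0; simpl; lia.
    apply HM. apply (atom_in_gen _ _ _ (proj1 HGC)).
    - apply Hg. exists 1%nat. apply pair_eq; pq; lia.
    - auto.
    - intros x y Cx Cy E.
      assert (Cg : Cc g /\ ray u (embed g)) by (apply Hg; exists 1%nat; apply pair_eq; pq; lia).
      assert (h0 : phiA g = 0) by (apply Hra; apply Cg).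
      rewrite E, Hlin in h0. pose proof (Hnn x Cx); pose proof (Hnn y Cy).
      destruct (proj1 (Hg x) (conj Cx (proj2 (Hra x Cx) ltac:(lra)))) as [na ->].
      destruct (proj1 (Hg y) (conj Cy (proj2 (Hra y Cy) ltac:(lra)))) as [nb ->].
      assert (norm1 g = norm1 (padd (scale na g) (scale nb g))) by (rewrite <- E; auto).
      rewrite norm_padd, !norm_scale in H1. pose proof (nz_norm _ Ng).
      destruct na. left; apply pair_eq; pq; lia. right. destruct nb. apply pair_eq; pq; lia. nia. }
  assert (N1 : (norm1 g1 <= M)%nat).
  { apply (Natom g1 phi1 u1); auto. apply (p1lin _ _ _ _ _ HG). apply (p1nn _ _ _ _ _ HG). }
  assert (N2 : (norm1 g2 <= M)%nat).
  { apply (Natom g2 phi2 u2); auto. apply (p2lin _ _ _ _ _ HG). apply (p2nn _ _ _ _ _ HG). }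
  pose proof (pow3 l) as P3.
  assert (Kb : (k <= 3 ^ l * (2 * k - 1))%nat) by nia.
  destruct (Rle_lt_or_eq_dec 0 (phi1 s) (p1nn _ _ _ _ _ HG s Cs)) as [p1|p1];
  [destruct (Rle_lt_or_eq_dec 0 (phi2 s) (p2nn _ _ _ _ _ HG s Cs)) as [p2|p2]|].
  -
    assert (Is : Int Cc phi1 phi2 s) by (split; auto).
    assert (Dec : forall z, gen_by GC z -> exists Lint p q,
      Forall (fun c => Int Cc phi1 phi2 c /\ (norm1 c <= M)%nat) Lint /\
      z = padd (psum Lint) (padd (scale p g1) (scale q g2)) /\
      (g1 = z0 -> p = 0%nat) /\ (g2 = z0 -> q = 0%nat)).
    { intros z Hz; induction Hz.
      - exists nil, 0%nat, 0%nat. repeat split; auto; try (apply pair_eq; pq; lia); discriminate.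
      - destruct IHHz as [Li [p [q [HF [E [Hp Hq]]]]]].
        assert (Cg : Cc g) by (eapply gen_in; [apply HGC|]; auto).
        pose proof (HM g H) as Ng.
        change (fst g + fst x, snd g + snd x)%nat with (padd g x).
        destruct (Rle_lt_or_eq_dec 0 (phi1 g) (p1nn _ _ _ _ _ HG g Cg)) as [q1|q1];
        [destruct (Rle_lt_or_eq_dec 0 (phi2 g) (p2nn _ _ _ _ _ HG g Cg)) as [q2|q2]|].
        + exists (g :: Li), p, q. split. constructor; auto. split; auto. split; auto.
          split. rewrite E; simpl; apply pair_eq; pq; lia. split; auto.
        + destruct (proj1 (Hg2 g) (conj Cg (proj2 (Hr2 g Cg) (eq_sym q2)))) as [n ->].
          destruct (classic (g2 = z0)) as [Z|Z].
          * exists Li, p, q. split; auto. split; auto. rewrite Z, scale_z0, E, (Hq Z). apply pair_eq; pq; lia.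
          * exists Li, p, (n + q)%nat. split; auto. split. rewrite E. apply pair_eq; pq; nia.
            split; auto. intros; contradiction.
        + destruct (proj1 (Hg1 g) (conj Cg (proj2 (Hr1 g Cg) (eq_sym q1)))) as [n ->].
          destruct (classic (g1 = z0)) as [Z|Z].
          * exists Li, p, q. split; auto. split; auto. rewrite Z, scale_z0, E, (Hp Z). apply pair_eq; pq; lia.
          * exists Li, (n + p)%nat, q. split; auto. split. rewrite E. apply pair_eq; pq; nia.
            split; auto. intros; contradiction. }
    destruct (Dec s) as [Li [p [q [HF [E [Hp Hq]]]]]].
    { apply (proj1 HGC). apply Cs. }
    assert (L1 : g1 <> z0 -> exists lam, (1 <= lam <= k)%nat /\ Sc (scale lam g1)).
    { intros N. apply (lam_bound Cc Sc phi1 phi2 L L0 u1 g1 s G1 k HG HL0 Hg1 Hr1 N (proj2 (proj2 (F1 N))) Is (proj1 HG1) Hm1). }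
    assert (L2 : g2 <> z0 -> exists lam, (1 <= lam <= k)%nat /\ Sc (scale lam g2)).
    { intros N. apply (lam_bound Cc Sc phi2 phi1 L L0 u2 g2 s G2 k (Good_swap _ _ _ _ _ HG) HL0 Hg2 Hr2 N
        (proj2 (proj2 (F2 N))) ltac:(destruct Is as [? [? ?]]; split; auto) (proj1 HG2) Hm2). }
    pose proof (interior_bound HG s Li p q g1 g2 k As Is
      (Forall_impl _ (fun c H => proj1 H) HF) E Hp Hq F1 F2 L1 L2 Hk1) as Hb.
    unfold P2 in Hb. rewrite Hl in Hb.
    assert (Hn : (norm1 s <= (length Li + p + q) * M)%nat).
    { rewrite E, !norm_padd, !norm_scale.
      pose proof (norm_psum_le M Li (Forall_impl _ (fun c H => proj2 H) HF)). unfold P2 in *. nia. }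
    eapply Nat.le_trans; [exact Hn|]. apply Nat.mul_le_mono_r; auto.
  -
    destruct (proj1 (Hg2 s) (conj Cs (proj2 (Hr2 s Cs) (eq_sym p2)))) as [n En].
    assert (Gs2 : G2 s).
    { apply (atom_in_gen _ _ _ (proj1 HG2)).
      - split. apply As. apply Hr2; auto.
      - apply As.
      - intros x y [Sx _] [Sy _] E. apply As; auto. }
    rewrite En in Gs2. apply Hm2 in Gs2. rewrite En, norm_scale.
    eapply Nat.le_trans with (k * M)%nat. nia. apply Nat.mul_le_mono_r; auto.
  -
    destruct (proj1 (Hg1 s) (conj Cs (proj2 (Hr1 s Cs) (eq_sym p1)))) as [n En].
    assert (Gs1 : G1 s).
    { apply (atom_in_gen _ _ _ (proj1 HG1)).
      - split. apply As. apply Hr1; auto.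
      - apply As.
      - intros x y [Sx _] [Sy _] E. apply As; auto. }
    rewrite En in Gs1. apply Hm1 in Gs1. rewrite En, norm_scale.
    eapply Nat.le_trans with (k * M)%nat. nia. apply Nat.mul_le_mono_r; auto.
Qed.
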